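(* Let $N\in\{1,2\}$, let $\lambda_1,\dots,\lambda_N$ be distinct real numbers and $\mu_1,\dots,\mu_N$ nonzero real constants, and let $\bar F_j$ ($1\le j\le N$) and $F_m$ ($1\le m\le 2N$) be the functions on $\mathbb{R}^{6N}$ defined below. Consider the $3N\times3N$ matrix \[D(N)=\begin{pmatrix}(\mathrm{grad}_{P_1}\bar F_1)^T&(\mathrm{grad}_{P_2}\bar F_1)^T&(\mathrm{grad}_{P_3}\bar F_1)^T\\ \vdots&\vdots&\vdots\\ (\mathrm{grad}_{P_1}\bar F_N)^T&(\mathrm{grad}_{P_2}\bar F_N)^T&(\mathrm{grad}_{P_3}\bar F_N)^T\\ (\mathrm{grad}_{P_1}F_1)^T&(\mathrm{grad}_{P_2}F_1)^T&(\mathrm{grad}_{P_3}F_1)^T\\ \vdots&\vdots&\vdots\\ (\mathrm{grad}_{P_1}F_{2N})^T&(\mathrm{grad}_{P_2}F_{2N})^T&(\mathrm{grad}_{P_3}F_{2N})^T\end{pmatrix},\] where $\mathrm{grad}_{P_i}G=(\frac{\partial G}{\partial\phi_{i1}},\dots,\frac{\partial G}{\partial\phi_{iN}})^T$. Then $\det D(N)$ is not identically zero on $\mathbb{R}^{6N}$; consequently the integrals of motion $\bar F_j$, $1\le j\le N$, and $F_m$, $1\le m\le 2N$, are independent at least on some region of $\mathbb{R}^{6N}$.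
   Context: Coordinates on $\mathbb{R}^{6N}$: $\phi_{ij},\psi_{ij}$ ($i=1,2,3$, $j=1,\dots,N$); $P_i=(\phi_{i1},\dots,\phi_{iN})^T$, $Q_i=(\psi_{i1},\dots,\psi_{iN})^T$; $A=\mathrm{diag}(\lambda_1,\dots,\lambda_N)$, $B=\mathrm{diag}(\mu_1,\dots,\mu_N)$; $\langle\cdot,\cdot\rangle$ the standard inner product on $\mathbb{R}^N$. $\bar F_j=\sum_{i=1}^3\phi_{ij}\psi_{ij}$. $F_1=-8(\langle P_1,BQ_1\rangle-\langle P_3,BQ_3\rangle)$ and for $m\ge2$: $F_m=4\sum_{i=1}^{m-1}\big[(\langle A^{i-1}P_1,BQ_1\rangle-\langle A^{i-1}P_3,BQ_3\rangle)(\langle A^{m-i-1}P_1,BQ_1\rangle-\langle A^{m-i-1}P_3,BQ_3\rangle)+2(\langle A^{i-1}P_1,BQ_2\rangle+\langle A^{i-1}P_2,BQ_3\rangle)(\langle A^{m-i-1}P_2,BQ_1\rangle+\langle A^{m-i-1}P_3,BQ_2\rangle)\big]-8(\langle A^{m-1}P_1,BQ_1\rangle-\langle A^{m-1}P_3,BQ_3\rangle)$. *)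

(* Defs.v *)
From HB Require Import structures.
From mathcomp Require Import all_boot all_order all_algebra.
From mathcomp Require Import mpoly.
Set Implicit Arguments. Unset Strict Implicit. Unset Printing Implicit Defensive.
Import Order.TTheory GRing.Theory Num.Theory.
Local Open Scope ring_scope.

(* Coordinates on R^{6N}: 6N = 3N + 3N polynomial variables.
   phi_{ij} (i : 'I_3 for i = 1,2,3; j : 'I_N) is variable number i*N + j
   (= lshift (mxvec_index i j)); psi_{ij} is variable number 3N + i*N + j. *)
Section Defs.
Variables (R : realFieldType) (N : nat).
Variables (lambda mu : 'I_N -> R).

Notation P := {mpoly R[3 * N + 3 * N]}.

Definition phi_var (i : 'I_3) (j : 'I_N) : 'I_(3 * N + 3 * N) :=
  lshift (3 * N) (mxvec_index i j).
Definition psi_var (i : 'I_3) (j : 'I_N) : 'I_(3 * N + 3 * N) :=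
  rshift (3 * N) (mxvec_index i j).

Definition phi (i : 'I_3) (j : 'I_N) : P := 'X_(phi_var i j).
Definition psi (i : 'I_3) (j : 'I_N) : P := 'X_(psi_var i j).

(* <A^k P_a, B Q_b> = sum_j lambda_j^k mu_j phi_{aj} psi_{bj} *)
Definition ip (k : nat) (a b : 'I_3) : P :=
  \sum_(j < N) (lambda j ^+ k * mu j) *: (phi a j * psi b j).

Definition i1 : 'I_3 := 0.
Definition i2 : 'I_3 := 1.
Definition i3 : 'I_3 := 2.

Definition Fbar (j : 'I_N) : P := \sum_(i < 3) phi i j * psi i j.

(* F_m for m >= 1 (for m = 1 the sum is empty and this is F_1). *)
Definition F (m : nat) : P :=
  4%:R * \sum_(1 <= i < m)
     ((ip i.-1 i1 i1 - ip i.-1 i3 i3) * (ip (m - i).-1 i1 i1 - ip (m - i).-1 i3 i3)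
      + 2%:R * ((ip i.-1 i1 i2 + ip i.-1 i2 i3) * (ip (m - i).-1 i2 i1 + ip (m - i).-1 i3 i2)))
  - 8%:R * (ip m.-1 i1 i1 - ip m.-1 i3 i3).

(* column c : 'I_(3N) = mxvec_index i j corresponds to d/d phi_{ij}
   (columns ordered P_1 block, P_2 block, P_3 block as in the paper) *)
Definition Dtop : 'M[P]_(N, 3 * N) :=
  \matrix_(j < N, c < 3 * N) mderiv (lshift (3 * N) c) (Fbar j).
Definition Dbot : 'M[P]_(2 * N, 3 * N) :=
  \matrix_(k < 2 * N, c < 3 * N) mderiv (lshift (3 * N) c) (F k.+1).

Lemma D_size : (N + 2 * N = 3 * N)%N.
Proof. by rewrite -[in RHS](addn1 2) mulnDl mul1n addnC. Qed.

Definition D : 'M[P]_(3 * N) := castmx (D_size, erefl) (col_mx Dtop Dbot).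

End Defs.

(* Main.v *)
Require Import Defs.
From HB Require Import structures.
From mathcomp Require Import all_boot all_order all_algebra.
From mathcomp Require Import mpoly.
From mathcomp Require Import ring.
Import Order.TTheory GRing.Theory Num.Theory.
Local Open Scope ring_scope.
Set Implicit Arguments. Unset Strict Implicit. Unset Printing Implicit Defensive.

Section G.
Variables (R : realFieldType) (N : nat) (lambda mu : 'I_N -> R).
Variable x : 'I_(3 * N + 3 * N) -> R.
Notation P := {mpoly R[3 * N + 3 * N]}.
Local Notation ev p := (meval x p).

Lemma ev_dX i j : ev (mderiv i ('X_j : P)) = (j == i)%:R.
Proof.
rewrite mderivX mevalZ mnm1E; case: eqP => [->|_]; last by rewrite mul0r.
have -> : (U_(i) - U_(i))%MM = 0%MM by apply/mnmP => k; rewrite mnmBE subnn mnm0E.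
by rewrite mpolyX0 meval1 mulr1.
Qed.

Lemma mxvec_index_inj (a b : 'I_3) (j k : 'I_N) :
  (mxvec_index a j == mxvec_index b k) = ((a == b) && (j == k)).
Proof.
apply/eqP/andP => [|[/eqP -> /eqP ->] //].
rewrite /mxvec_index => /cast_ord_inj /enum_rank_inj [-> ->]; by split.
Qed.

Lemma ev_dphi a j' b j : ev (mderiv (phi_var a j') (phi R b j)) = ((b == a) && (j == j'))%:R.
Proof. by rewrite /phi ev_dX /phi_var (inj_eq (@lshift_inj _ _)) mxvec_index_inj. Qed.

Lemma ev_dpsi a j' b j : ev (mderiv (phi_var a j') (psi R b j)) = 0.
Proof.
rewrite /psi ev_dX; case: eqP => // H.
have h1 : (3 * N <= val (psi_var b j))%N by rewrite /= leq_addr.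
have h2 : (val (phi_var a j') < 3 * N)%N.
  exact: (ltn_ord (mxvec_index a j')).
by rewrite H leqNgt h2 in h1.
Qed.

Lemma ev_ip k b c : ev (ip lambda mu k b c) =
  \sum_(j < N) lambda j ^+ k * mu j * x (phi_var b j) * x (psi_var c j).
Proof.
rewrite /ip raddf_sum; apply: eq_bigr => j _.
  by rewrite /= mevalZ mevalM /phi /psi !mevalXU mulrA.
Qed.

Lemma ev_dip a j' k b c : ev (mderiv (phi_var a j') (ip lambda mu k b c)) =
  (b == a)%:R * (lambda j' ^+ k * mu j' * x (psi_var c j')).
Proof.
rewrite /ip (raddf_sum (mderiv _)) (raddf_sum (meval x)) /= (bigD1 j') //= big1 ?addr0.
  rewrite mderivZ mderivM mevalZ mevalD !mevalM ev_dphi ev_dpsi eqxx andbT.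
  by rewrite mulr0 addr0 /psi mevalXU mulrCA mulrA.
move=> j /negbTE hj; rewrite mderivZ mderivM mevalZ mevalD !mevalM ev_dphi ev_dpsi hj andbF.
by rewrite mul0r mulr0 addr0 mulr0.
Qed.

Lemma ev_dFbar a j' j : ev (mderiv (phi_var a j') (Fbar R j)) =
  (j == j')%:R * x (psi_var a j).
Proof.
rewrite /Fbar (raddf_sum (mderiv _)) (raddf_sum (meval x)) /= (bigD1 a) //= big1 ?addr0.
  rewrite mderivM mevalD !mevalM ev_dphi ev_dpsi eqxx /= mulr0 addr0 /psi mevalXU.
  by case: (j == j'); rewrite ?mul1r ?mul0r.
move=> i /negbTE hi; rewrite mderivM mevalD !mevalM ev_dphi ev_dpsi hi /=.
by rewrite mul0r mulr0 addr0.
Qed.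


Lemma ev_dF_gen a j' m :
  let dI k b c := ev (mderiv (phi_var a j') (ip lambda mu k b c)) in
  let eI k b c := ev (ip lambda mu k b c) in
  ev (mderiv (phi_var a j') (F lambda mu m)) =
  (\sum_(1 <= i < m)
     ((dI i.-1 i1 i1 - dI i.-1 i3 i3) * (eI (m - i).-1 i1 i1 - eI (m - i).-1 i3 i3)
    + (eI i.-1 i1 i1 - eI i.-1 i3 i3) * (dI (m - i).-1 i1 i1 - dI (m - i).-1 i3 i3)
    + ((dI i.-1 i1 i2 + dI i.-1 i2 i3) * (eI (m - i).-1 i2 i1 + eI (m - i).-1 i3 i2)
    + (eI i.-1 i1 i2 + eI i.-1 i2 i3) * (dI (m - i).-1 i2 i1 + dI (m - i).-1 i3 i2)) *+ 2))
     *+ 4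
  - (dI m.-1 i1 i1 - dI m.-1 i3 i3) *+ 8.
Proof.
move=> dI eI.
rewrite /F !mulr_natl mderivB !mderivMn mevalB !mevalMn.
rewrite (raddf_sum (mderiv _)) (raddf_sum (meval x)) /=.
rewrite mderivB mevalB; congr (_ *+ 4 - _).
apply: eq_bigr => i _.
rewrite mulr_natl mderivD mderivMn !mderivM. rewrite !mderivD !mderivN.
rewrite !(mevalD, mevalN, mevalMn, mevalM).
by rewrite mulr2n.
Qed.
End G.

Section Pt.
Variables (R : realFieldType) (N : nat) (lambda mu t : 'I_N -> R).

Definition dec (c : 'I_(3 * N)) : 'I_3 * 'I_N :=
  enum_val (cast_ord (esym (mxvec_cast 3 N)) c).

Lemma decK a j : dec (mxvec_index a j) = (a, j).
Proof. by rewrite /dec /mxvec_index cast_ordK enum_rankK. Qed.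

Definition pt (k : 'I_(3 * N + 3 * N)) : R :=
  match split k with
  | inl c => if (dec c).1 == i2 then t (dec c).2 else 0
  | inr c => if (dec c).1 == i2 then 0 else 1
  end.

Lemma pt_phi a j : pt (phi_var a j) = if a == i2 then t j else 0.
Proof.
rewrite /pt /phi_var.
have -> : split (lshift (3 * N) (mxvec_index a j)) = inl (mxvec_index a j)
  by exact: (unsplitK (inl _ (mxvec_index a j))).
by rewrite decK.
Qed.

Lemma pt_psi a j : pt (psi_var a j) = if a == i2 then 0 else 1.
Proof.
rewrite /pt /psi_var.
have -> : split (rshift (3 * N) (mxvec_index a j)) = inr (mxvec_index a j)
  by exact: (unsplitK (inr _ (mxvec_index a j))).
by rewrite decK.
Qed.

Definition sk k := \sum_(j < N) lambda j ^+ k * mu j * t j.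

Lemma ev_ip_pt k b c : meval pt (ip lambda mu k b c) =
  (b == i2)%:R * (c != i2)%:R * sk k.
Proof.
rewrite ev_ip /sk mulr_sumr; apply: eq_bigr => j _.
rewrite pt_phi pt_psi; case: (b == i2); case: (c == i2) => /=;
  ring.
Qed.

Lemma ev_dip_pt a j' k b c : meval pt (mderiv (phi_var a j') (ip lambda mu k b c)) =
  (b == a)%:R * ((c != i2)%:R * (lambda j' ^+ k * mu j')).
Proof.
rewrite ev_dip pt_psi; case: (c == i2) => /=; ring.
Qed.

Lemma ev_dF_pt a j' m : meval pt (mderiv (phi_var a j') (F lambda mu m)) =
  (\sum_(1 <= i < m) ((i2 == a)%:R * (lambda j' ^+ i.-1 * mu j' * sk (m - i).-1
        + sk i.-1 * (lambda j' ^+ (m - i).-1 * mu j')) *+ 2)) *+ 4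
  - ((i1 == a)%:R - (i3 == a)%:R) * (lambda j' ^+ m.-1 * mu j') *+ 8.
Proof.
rewrite ev_dF_gen /= !ev_dip_pt; congr (_ *+ 4 - _).
  apply: eq_bigr => i _; rewrite !ev_ip_pt !ev_dip_pt /=.
  have E : forall b c : 'I_3, (b == c) = (val b == val c) by [].
  ring.
have -> : (i1 != i2) = true by [].
rewrite /=; ring.
Qed.
End Pt.

Lemma colE (R : realFieldType) (N : nat) (lambda mu : 'I_N -> R) (x : 'I_(3 * N + 3 * N) -> R)
  (v : 'rV[R]_(3 * N)) a j' :
  (v *m map_mx (meval x) (D lambda mu)) 0 (mxvec_index a j') =
  \sum_(j < N) v 0 (cast_ord (D_size N) (lshift (2 * N) j)) * meval x (mderiv (phi_var a j') (Fbar R j))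
  + \sum_(k < 2 * N) v 0 (cast_ord (D_size N) (rshift N k)) * meval x (mderiv (phi_var a j') (F lambda mu k.+1)).
Proof.
rewrite mxE (reindex (cast_ord (D_size N))) /=; last first.
  by exists (cast_ord (esym (D_size N))) => i _; rewrite ?cast_ordK ?cast_ordKV.
rewrite big_split_ord /=; congr (_ + _); apply: eq_bigr => j _;
  by rewrite !mxE castmxE /= cast_ordK cast_ord_id ?col_mxEu ?col_mxEd mxE.
Qed.

Lemma row_cases (R : realFieldType) N (v : 'rV[R]_(3 * N)) :
  (forall j, v 0 (cast_ord (D_size N) (lshift (2 * N) j)) = 0) ->
  (forall k, v 0 (cast_ord (D_size N) (rshift N k)) = 0) -> v = 0.
Proof.
move=> h1 h2; apply/rowP => r; rewrite mxE.
set r' := cast_ord (esym (D_size N)) r.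
have -> : r = cast_ord (D_size N) r' by rewrite /r' cast_ordKV.
case: (splitP r') => k hk.
  by rewrite (_ : r' = lshift _ k) ?h1 //; apply: val_inj.
by rewrite (_ : r' = rshift _ k) ?h2 //; apply: val_inj.
Qed.

Lemma mul0_nz (R : idomainType) (a b : R) : a * b = 0 -> b != 0 -> a = 0.
Proof. by move/eqP; rewrite mulf_eq0 => /orP [/eqP //|/eqP -> /eqP]. Qed.

Lemma nat_nz (R : realFieldType) n : (n.+1%:R : R) != 0.
Proof. by rewrite pnatr_eq0. Qed.

Lemma comb2 (R : comRingType) (a b x y : R) : a = 0 -> b = 0 -> x * a + y * b = 0.
Proof. by move=> -> ->; rewrite !mulr0 addr0. Qed.

Lemma case1 (R : realFieldType) (lambda mu : 'I_1 -> R) :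
  (forall j, mu j != 0) ->
  exists x : 'I_(3 * 1 + 3 * 1) -> R, (\det (D lambda mu)).@[x] != 0.
Proof.
move=> hmu.
pose t := fun _ : 'I_1 => (1 : R).
exists (pt t); rewrite -det_map_mx; apply/det0P => -[v vn0 vM].
have col a : (v *m map_mx (meval (pt t)) (D lambda mu)) 0 (mxvec_index a ord0) = 0
  by rewrite vM mxE.
move: (col i1) (col i2) (col i3); rewrite !colE.
rewrite -[(2 * 1)%N]/2%N => c1 c2 c3.
rewrite !big_ord_recl !big_ord0 !ev_dFbar !ev_dF_pt !pt_psi /= /index_iota /= !big_cons !big_nil /sk !big_ord_recl !big_ord0 /= /t /bump /= in c1 c2 c3.
set w0 := v 0 (cast_ord (D_size 1) (lshift 2 ord0)) in c1 c2 c3.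
set z0 := v 0 (cast_ord (D_size 1) (rshift 1 ord0)) in c1 c2 c3.
set z1 := v 0 (cast_ord (D_size 1) (rshift 1 (lift ord0 ord0))) in c1 c2 c3.
have hm := hmu ord0.
set l := lambda ord0 in c1 c2 c3.
set m := mu ord0 in c1 c2 c3 hm.
have ez1 : z1 = 0.
  apply: (@mul0_nz _ _ (m * m * 16%:R)); first by rewrite -c2; ring.
  by rewrite !mulf_neq0 // nat_nz.
rewrite ez1 in c1 c3.
have ew0 : w0 = 0.
  have h := f_equal2 +%R c1 c3; rewrite [0 + 0]addr0 in h.
  apply: (@mul0_nz _ _ 2%:R); first by rewrite -h; ring.
  exact: nat_nz.
have ez0 : z0 = 0.
  have h := f_equal2 (fun a b => a - b) c3 c1; rewrite [0 - 0]subrr in h.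
  apply: (@mul0_nz _ _ (m * 16%:R)); first by rewrite -h; ring.
  by rewrite !mulf_neq0 // nat_nz.
apply: (negP vn0); apply/eqP; apply: row_cases => [j|k].
  by rewrite (ord1 j); exact: ew0.
case: k => [[|[|//]] hk].
  by rewrite (_ : Ordinal hk = ord0); [exact: ez0 | apply: val_inj].
by rewrite (_ : Ordinal hk = lift ord0 ord0); [exact: ez1 | apply: val_inj].
Qed.

Lemma case2 (R : realFieldType) (lambda mu : 'I_2 -> R) :
  injective lambda -> (forall j, mu j != 0) ->
  exists x : 'I_(3 * 2 + 3 * 2) -> R, (\det (D lambda mu)).@[x] != 0.
Proof.
move=> linj hmu.
pose t := fun j : 'I_2 => if val j == 0%N then mu (lift ord0 ord0) else - mu ord0.
exists (pt t); rewrite -det_map_mx; apply/det0P => -[v vn0 vM].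
have col a j : (v *m map_mx (meval (pt t)) (D lambda mu)) 0 (mxvec_index a j) = 0
  by rewrite vM mxE.
move: (col i1 ord0) (col i2 ord0) (col i3 ord0) (col i1 (lift ord0 ord0)) (col i2 (lift ord0 ord0)) (col i3 (lift ord0 ord0)); rewrite !colE.
rewrite -[(2 * 2)%N]/4%N => c1a c2a c3a c1b c2b c3b.
rewrite !big_ord_recl !big_ord0 !ev_dFbar !ev_dF_pt !pt_psi /= /index_iota /= !big_cons !big_nil /sk !big_ord_recl !big_ord0 /= /t /bump /= in c1a c2a c3a c1b c2b c3b.
set o1 := lift ord0 ord0 in c1a c2a c3a c1b c2b c3b.
set w0 := v 0 (cast_ord (D_size 2) (lshift 4 ord0)) in c1a c2a c3a c1b c2b c3b.
set w1 := v 0 (cast_ord (D_size 2) (lshift 4 o1)) in c1a c2a c3a c1b c2b c3b.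
set z0 := v 0 (cast_ord (D_size 2) (rshift 2 ord0)) in c1a c2a c3a c1b c2b c3b.
set z1 := v 0 (cast_ord (D_size 2) (rshift 2 (lift ord0 ord0))) in c1a c2a c3a c1b c2b c3b.
set z2 := v 0 (cast_ord (D_size 2) (rshift 2 (lift ord0 (lift ord0 ord0)))) in c1a c2a c3a c1b c2b c3b.
set z3 := v 0 (cast_ord (D_size 2) (rshift 2 (lift ord0 (lift ord0 (lift ord0 ord0))))) in c1a c2a c3a c1b c2b c3b.
have hm0 := hmu ord0; have hm1 := hmu o1.
have hl : lambda ord0 - lambda o1 != 0 by rewrite subr_eq0 (inj_eq linj).
set l0 := lambda ord0 in c1a c2a c3a c1b c2b c3b hl.
set l1 := lambda o1 in c1a c2a c3a c1b c2b c3b hl.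
set m0 := mu ord0 in c1a c2a c3a c1b c2b c3b hm0.
set m1 := mu o1 in c1a c2a c3a c1b c2b c3b hm1.
have n16 : (16%:R : R) != 0 by exact: nat_nz.
have n2 : (2%:R : R) != 0 by exact: nat_nz.
have ez3 : z3 = 0.
  apply: (@mul0_nz _ _ (m0 * m0 * m1 * m1 * (l0 - l1) * (l0 - l1) * 16%:R)).
    by apply: etrans _ (comb2 m1 (- m0) c2a c2b); ring.
  by rewrite !mulf_neq0.
have ez2 : z2 = 0.
  apply: (@mul0_nz _ _ (m0 * m0 * m1 * (l0 - l1) * 16%:R)).
    by apply: etrans _ c2a; rewrite ez3; ring.
  by rewrite !mulf_neq0.
have ez1 : z1 = 0.
  apply: (@mul0_nz _ _ (m0 * m1 * (l0 - l1) * 16%:R)).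
    apply: etrans _ (comb2 m1 (- m0) (comb2 1 (-1) c3a c1a) (comb2 1 (-1) c3b c1b)).
    by rewrite ez2 ez3; ring.
  by rewrite !mulf_neq0.
have ez0 : z0 = 0.
  apply: (@mul0_nz _ _ (m0 * 16%:R)).
    by apply: etrans _ (comb2 1 (-1) c3a c1a); rewrite ez1 ez2 ez3; ring.
  by rewrite !mulf_neq0.
have ew0 : w0 = 0.
  apply: (@mul0_nz _ _ 2%:R) => //.
  by apply: etrans _ (comb2 1 1 c1a c3a); ring.
have ew1 : w1 = 0.
  apply: (@mul0_nz _ _ 2%:R) => //.
  by apply: etrans _ (comb2 1 1 c1b c3b); ring.
apply: (negP vn0); apply/eqP; apply: row_cases => [j|k].
  case: j => [[|[|//]] hj].
    by rewrite (_ : Ordinal hj = ord0); [exact: ew0 | apply: val_inj].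
  by rewrite (_ : Ordinal hj = o1); [exact: ew1 | apply: val_inj].
case: k => [[|[|[|[|//]]]] hk].
- by rewrite (_ : Ordinal hk = ord0); [exact: ez0 | apply: val_inj].
- by rewrite (_ : Ordinal hk = lift ord0 ord0); [exact: ez1 | apply: val_inj].
- by rewrite (_ : Ordinal hk = lift ord0 (lift ord0 ord0)); [exact: ez2 | apply: val_inj].
- by rewrite (_ : Ordinal hk = lift ord0 (lift ord0 (lift ord0 ord0))); [exact: ez3 | apply: val_inj].
Qed.

Unset Implicit Arguments.

Theorem theorem3p3 (R : realFieldType) (N : nat) (lambda mu : 'I_N -> R) :
  (N = 1 \/ N = 2)%N ->
  injective lambda ->
  (forall j, mu j != 0) ->
  exists x : 'I_(3 * N + 3 * N) -> R, (\det (D lambda mu)).@[x] != 0.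
Proof.
case=> hN; subst N => linj hmu.
  exact: case1.
exact: case2.
Qed.
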